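(* Let $P$ be an online minimization problem, let $p^r$ be an $r$-round input distribution with associated round cost functions $\mathrm{cost}_i$, and let $\mathrm{ALG}$ be a deterministic algorithm reading at most $b$ bits of advice on every input in the support of $p^r$. Assume there is a convex and decreasing function $f:[0,\infty]\to\mathbb{R}$ such that for every $1\leq i\leq r$ and every $w\in\mathcal{W}_i$, $$\mathbb{E}[\mathrm{cost}_i(\mathrm{ALG})\mid W_i=w]\geq f\big(D_{KL}(p_{i\mid w}\,\|\,p_i)\big).$$ Then $\mathbb{E}[\mathrm{cost}(\mathrm{ALG})]\geq r\,f(b/r)$.
   Context: For $P$-inputs $\sigma_1,\dots,\sigma_r$, $\sigma_1\cdots\sigma_r$ denotes the input with initial state of $\sigma_1$ and the requests of all $\sigma_i$ concatenated. An $r$-round input distribution: finite sets $I_1,\dots,I_r$ of $P$-inputs such that every $\sigma_1\cdots\sigma_r$ with $\sigma_i\in I_i$ is a valid $P$-input; $I^r$ is the set of all these; for each $i$ a round cost function $\mathrm{cost}_i$ mapping an output $\gamma$ for an input $\sigma\in I^r$ to a non-negative real; distributions $p_i$ on $I_i$ and the product distribution $p^r(\sigma_1\cdots\sigma_r)=\prod_ip_i(\sigma_i)$. With the input drawn from $p^r$: $X_i$ is the round-$i$ part $\sigma_i$; $B$ is the $b$-bit advice string that $\mathrm{ALG}$ receives at the start (the first $b$ bits of the oracle's tape for that input); $\mathrm{cost}_i(\mathrm{ALG})$ is $\mathrm{cost}_i$ of $\mathrm{ALG}$'s output, $\mathrm{cost}(\mathrm{ALG})=\sum_i\mathrm{cost}_i(\mathrm{ALG})$;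 $W_i=(X_1,\dots,X_{i-1},B)$ with $\mathcal{W}_i$ the set of its values of positive probability; $p_{i\mid w}(x)=\Pr[X_i=x\mid W_i=w]$. $D_{KL}(\mu\|\nu)=\sum_\omega\mu(\omega)\log_2(\mu(\omega)/\nu(\omega))$ (with $0\log0=0$). *)

(* Defs.v *)
From HB Require Import structures.
From mathcomp Require Import all_boot all_order all_algebra.
From mathcomp Require Import reals exp.
Unset Printing Implicit Defensive.
Import Order.TTheory GRing.Theory Num.Theory.
Local Open Scope ring_scope.

Section Defs.
Variable R : realType.

Definition log2 (x : R) : R := ln x / ln 2.

Definition KL (T : finType) (mu nu : T -> R) : R :=
  \sum_(z : T) (if mu z == 0 then 0 else mu z * log2 (mu z / nu z)).

Variables (r : nat) (I : 'I_r -> finType).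

Definition Input := {dffun forall i : 'I_r, I i}.

Definition is_round_distr (p : forall i : 'I_r, I i -> R) : Prop :=
  (forall i (x : I i), 0 <= p i x) /\ (forall i, \sum_(x : I i) p i x = 1).

Definition prodp (p : forall i : 'I_r, I i -> R) (x : Input) : R :=
  \prod_(i < r) p i (x i).

Variable b : nat.

(* The event W_i = w, where w = (y_1..y_{i-1}, beta) is encoded by an input y
   (only its rounds j < i matter) and an advice string beta. *)
Definition Wevent (adv : Input -> b.-tuple bool) (i : 'I_r) (y : Input)
    (beta : b.-tuple bool) (x : Input) : bool :=
  [forall j : 'I_r, (j < i)%N ==> (x j == y j :> I j)] && (adv x == beta).

Definition PrW p adv i y beta : R :=
  \sum_(x : Input | Wevent adv i y beta x) prodp p x.

Definition condE p adv (c : Input -> R) i y beta : R :=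
  (\sum_(x : Input | Wevent adv i y beta x) prodp p x * c x) / PrW p adv i y beta.

Definition condp p adv i y beta (z : I i) : R :=
  (\sum_(x : Input | Wevent adv i y beta x && (x i == z)) prodp p x)
    / PrW p adv i y beta.

Definition Ecost p (cost : 'I_r -> Input -> R) : R :=
  \sum_(x : Input) prodp p x * \sum_(i < r) cost i x.

End Defs.

Arguments log2 {R}.
Arguments KL {R T}.
Arguments Input {r}.
Arguments is_round_distr {R r I}.
Arguments prodp {R r I}.
Arguments Wevent {r I b}.
Arguments PrW {R r I b}.
Arguments condE {R r I b}.
Arguments condp {R r I b}.
Arguments Ecost {R r I}.

(* Main.v *)
Require Import Defs.
From HB Require Import structures.
From mathcomp Require Import all_boot all_order all_algebra.
From mathcomp Require Import reals exp.
From mathcomp Require Import ring lra.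
Import Order.TTheory GRing.Theory Num.Theory.
Local Open Scope ring_scope.

Lemma sum_prodp (R : realType) (r : nat) (I : 'I_r -> finType)
    (p : forall i : 'I_r, I i -> R) :
  \sum_(x : Input I) prodp p x = \prod_(i < r) \sum_(z : I i) p i z.
Proof.
pose J := {i : 'I_r & I i}.
pose G (i : 'I_r) (j : J) : R := untag 0 (p i) j.
have E1 i : \sum_(z : I i) p i z = \sum_(j : J | tag j == i) G i j.
  rewrite (big_sub (tagged_with I i)) /=.
  rewrite (reindex (@tag_with _ I i)) /=; last first.
    by apply: onW_bij; apply: tag_with_bij.
  apply: eq_bigr => z _; rewrite /G (untagE _ _ (erefl i : tag (Tagged I z) = i)) //.
rewrite (eq_bigr _ (fun i _ => E1 i)).
rewrite bigA_distr_big_dep.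
rewrite (big_sub (family (tagged_with I))) /=.
rewrite (reindex (@to_family_tagged_with _ I)) /=; last first.
  by apply: onW_bij; apply: to_family_tagged_with_bij.
rewrite (reindex (@dffun_of_fprod _ I) (P := xpredT)) /=; last first.
  by apply: onW_bij; apply: dffun_of_fprod_bij.
apply: eq_bigr => y _; rewrite /prodp; apply: eq_bigr => i _.
rewrite ffunE /G (untagE _ _ (tag_fprod_fun y i)) etaggedE //.
Qed.

Lemma jensen_seq (R : realType) (T : eqType) (f : R -> R)
  (hconv : forall x y t, 0 <= x -> 0 <= y -> 0 <= t <= 1 ->
     f (t * x + (1 - t) * y) <= t * f x + (1 - t) * f y)
  (w v : T -> R) (s : seq T) :
  (forall k, 0 <= w k) -> (forall k, 0 <= v k) -> 0 < \sum_(k <- s) w k ->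
  (\sum_(k <- s) w k) * f ((\sum_(k <- s) w k * v k) / \sum_(k <- s) w k)
   <= \sum_(k <- s) w k * f (v k).
Proof.
move=> w0 v0; elim: s => [|a s IH]; first by rewrite big_nil ltxx.
rewrite !big_cons.
have W0 : 0 <= \sum_(k <- s) w k by apply: sumr_ge0.
have S0 : 0 <= \sum_(k <- s) w k * v k by apply: sumr_ge0 => k _; apply: mulr_ge0.
have [Wz|Wp] := eqVneq (\sum_(k <- s) w k) 0.
  have wz : forall k, k \in s -> w k = 0.
    move=> k ks; move/eqP: Wz; rewrite psumr_eq0; last by move=> *; apply: w0.
    by move/allP/(_ k ks)/implyP/(_ isT)/eqP.
  have e1 : \sum_(k <- s) w k * v k = 0.
    by rewrite big_seq big1 // => k /wz ->; rewrite mul0r.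
  have e2 : \sum_(k <- s) w k * f (v k) = 0.
    by rewrite big_seq big1 // => k /wz ->; rewrite mul0r.
  rewrite Wz e1 e2.
  rewrite !addr0 => Ap; rewrite mulrAC mulfV ?mul1r //; by rewrite gt_eqF.
move=> AWp.
have Wpos : 0 < \sum_(k <- s) w k by rewrite lt_def Wp W0.
have {}IH := IH Wpos.
set A := w a in AWp *; set W := \sum_(k <- s) w k in W0 Wp Wpos IH *.
set S := \sum_(k <- s) w k * v k in S0 IH *.
set F := \sum_(k <- s) w k * f (v k) in IH *.
have A0 : 0 <= A by apply: w0.
set t := A / (A + W).
have t01 : 0 <= t <= 1.
  apply/andP; split; first by apply: divr_ge0 => //; apply: addr_ge0.
  by rewrite ler_pdivrMr // mul1r lerDl.
have AW0 : A + W != 0 by rewrite gt_eqF.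
have e1 : (A * v a + S) / (A + W) = t * v a + (1 - t) * (S / W).
  rewrite /t; field; apply/andP; split => //; by rewrite gt_eqF.
have := hconv (v a) (S / W) t (v0 a) (divr_ge0 S0 W0) t01.
rewrite -e1 => H.
have H2 := ler_wpM2l (ltW AWp) H.
apply: (le_trans H2).
have e2 : (A + W) * (t * f (v a) + (1 - t) * f (S / W)) = A * f (v a) + W * f (S / W).
  rewrite /t; field; by [].
by rewrite e2 lerD2l.
Qed.

Lemma ln_le_sub1 (R : realType) (x : R) : 0 < x -> ln x <= x - 1.
Proof.
move=> x0; have := @le_ln1Dx R (x - 1).
have -> : 1 + (x - 1) = x by ring.
apply; lra.
Qed.

Lemma ln2_gt0 (R : realType) : 0 < ln (2 : R).
Proof. apply: ln_gt0; lra. Qed.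

Lemma KL_ge0 (R : realType) (T : finType) (mu nu : T -> R) :
  (forall z, 0 <= mu z) -> (forall z, 0 <= nu z) ->
  \sum_z mu z = 1 -> \sum_z nu z <= 1 -> (forall z, 0 < mu z -> 0 < nu z) ->
  0 <= KL mu nu.
Proof.
move=> mu0 nu0 smu snu pos.
have l2 := ln2_gt0 R.
have H z : (mu z - nu z) / ln 2 <= (if mu z == 0 then 0 else mu z * log2 (mu z / nu z)).
  have [mz|mz] := eqVneq (mu z) 0.
    rewrite mz sub0r mulNr oppr_le0; apply: divr_ge0 => //; exact: ltW.
  have mp : 0 < mu z by rewrite lt_def mz mu0.
  have np := pos z mp.
  rewrite /log2 mulrA ler_pM2r ?invr_gt0 //.
  have q0 : 0 < nu z / mu z by apply: divr_gt0.
  have := ln_le_sub1 _ _ q0.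
  rewrite -[mu z / nu z]invf_div lnV ?posrE //.
  move=> h.
  have : mu z * ln (nu z / mu z) <= mu z * (nu z / mu z - 1) by rewrite ler_pM2l.
  have -> : mu z * (nu z / mu z - 1) = nu z - mu z by field; rewrite gt_eqF.
  lra.
apply: le_trans (ler_sum _ (fun z _ => H z)).
rewrite -mulr_suml sumrB smu; apply: mulr_ge0; last by rewrite invr_ge0 ltW.
lra.
Qed.

Lemma Wev_self {r} {I : 'I_r -> finType} {b} (adv : Input I -> b.-tuple bool) i x :
  Wevent adv i x (adv x) x.
Proof. by rewrite /Wevent eqxx andbT; apply/forallP => j; apply/implyP. Qed.

Lemma Wev_trans {r} {I : 'I_r -> finType} {b} (adv : Input I -> b.-tuple bool) i x x' :
  Wevent adv i x (adv x) x' -> Wevent adv i x' (adv x') =1 Wevent adv i x (adv x).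
Proof.
case/andP => /forallP H /eqP ea t; rewrite /Wevent ea; congr (_ && _).
apply/forallP/forallP => K j; apply/implyP => ji;
  have := implyP (K j) ji; have := implyP (H j) ji => /eqP e1 /eqP e2;
  by rewrite e2 e1.
Qed.

Arguments Wev_trans {r I b adv i x x'}.

Lemma Wev_sym {r} {I : 'I_r -> finType} {b} (adv : Input I -> b.-tuple bool) i x x' :
  Wevent adv i x (adv x) x' = Wevent adv i x' (adv x') x.
Proof.
apply/idP/idP => H.
  by rewrite (Wev_trans H) Wev_self.
by rewrite (Wev_trans H) Wev_self.
Qed.

Lemma PrW_ge {R : realType} {r} {I : 'I_r -> finType} {b} (p : forall i : 'I_r, I i -> R)
  (adv : Input I -> b.-tuple bool) i x :
  (forall x, 0 <= prodp p x) -> prodp p x <= PrW p adv i x (adv x).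
Proof.
move=> P0; rewrite /PrW (bigD1 x) ?Wev_self //= lerDl.
by apply: sumr_ge0.
Qed.

Lemma PrW_eq {R : realType} {r} {I : 'I_r -> finType} {b} (p : forall i : 'I_r, I i -> R)
  (adv : Input I -> b.-tuple bool) i x x' :
  Wevent adv i x (adv x) x' -> PrW p adv i x' (adv x') = PrW p adv i x (adv x).
Proof. by move=> H; rewrite /PrW; apply: eq_bigl => t; rewrite (Wev_trans H). Qed.

Arguments PrW_eq {R r I b p adv i x x'}.

Lemma class_trick {R : realType} {r} {I : 'I_r -> finType} {b}
  (p : forall i : 'I_r, I i -> R) (adv : Input I -> b.-tuple bool) (i : 'I_r)
  (H : Input I -> Input I -> R) :
  (forall x, 0 <= prodp p x) ->
  (forall x x', Wevent adv i x (adv x) x' -> H x x' = H x' x') ->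
  \sum_x prodp p x * ((\sum_(x' | Wevent adv i x (adv x) x') prodp p x' * H x x')
      / PrW p adv i x (adv x))
  = \sum_x prodp p x * H x x.
Proof.
move=> P0 HH.
set P := prodp p.
transitivity (\sum_x \sum_(x' | Wevent adv i x (adv x) x')
   (P x * P x' * H x' x' / PrW p adv i x' (adv x'))).
  apply: eq_bigr => x _; rewrite mulr_suml mulr_sumr; apply: eq_bigr => x' W.
  by rewrite HH // (PrW_eq W) !mulrA.
rewrite (exchange_big_dep xpredT) //=.
apply: eq_bigr => x' _.
rewrite (eq_bigl _ _ (fun x => Wev_sym adv i x x')).
rewrite (eq_bigr (fun x => (P x' * H x' x' / PrW p adv i x' (adv x')) * P x)); last first.
  by move=> x _; ring.
rewrite -mulr_sumr -/(PrW p adv i x' (adv x')).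
have [Pz|Pnz] := eqVneq (P x') 0; first by rewrite Pz !mul0r.
have Ppos : 0 < P x' by rewrite lt_def Pnz P0.
have Wpos : 0 < PrW p adv i x' (adv x') := lt_le_trans Ppos (PrW_ge _ _ _ _ P0).
by rewrite mulfVK // gt_eqF.
Qed.

Lemma P_ge0 {R : realType} {r} {I : 'I_r -> finType} (p : forall i : 'I_r, I i -> R) :
  is_round_distr p -> forall x, 0 <= prodp p x.
Proof. by case=> h _ x; apply: prodr_ge0 => i _. Qed.

Lemma P_sum1 {R : realType} {r} {I : 'I_r -> finType} (p : forall i : 'I_r, I i -> R) :
  is_round_distr p -> \sum_x prodp p x = 1.
Proof. by case=> _ h; rewrite sum_prodp big1. Qed.

Lemma num_partition {R : realType} {r} {I : 'I_r -> finType} {b}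
  (adv : Input I -> b.-tuple bool) (i : 'I_r) y beta
  (F : Input I -> R) :
  \sum_(z : I i) \sum_(x | Wevent adv i y beta x && (x i == z)) F x
  = \sum_(x | Wevent adv i y beta x) F x.
Proof. by rewrite (partition_big (fun x : Input I => x i) xpredT). Qed.

Lemma PrW_ge0 {R : realType} {r} {I : 'I_r -> finType} {b}
  (p : forall i : 'I_r, I i -> R) (adv : Input I -> b.-tuple bool) i y beta :
  is_round_distr p -> 0 <= PrW p adv i y beta.
Proof. by move=> hp; apply: sumr_ge0 => x _; exact: P_ge0. Qed.

Lemma KLx_ge0 {R : realType} {r} {I : 'I_r -> finType} {b}
  (p : forall i : 'I_r, I i -> R) (adv : Input I -> b.-tuple bool) i y beta :
  is_round_distr p -> 0 <= KL (condp p adv i y beta) (p i).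
Proof.
move=> hp; have P0 := P_ge0 _ hp.
have [Wz|Wnz] := eqVneq (PrW p adv i y beta) 0.
  rewrite /KL big1 // => z _.
  by rewrite /condp Wz invr0 mulr0 eqxx.
have Wpos : 0 < PrW p adv i y beta by rewrite lt_def Wnz (PrW_ge0 _ _ _ _ _ hp).
have num0 z : 0 <= \sum_(x | Wevent adv i y beta x && (x i == z)) prodp p x.
  by apply: sumr_ge0.
apply: KL_ge0.
- by move=> z; rewrite /condp; apply: divr_ge0 => //; apply: ltW.
- by move=> z; case: hp => h _; apply: h.
- rewrite /condp -mulr_suml num_partition -/(PrW p adv i y beta).
  by rewrite mulfV.
- by case: hp => _ h; rewrite (h i).
move=> z mz; case: hp => h _.
rewrite lt_def h andbT; apply/negP => /eqP pz.
move: mz; rewrite /condp big1 ?mul0r ?ltxx // => x /andP[_ /eqP xz].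
by rewrite /prodp (bigD1 i) //= xz pz mul0r.
Qed.

Lemma round_bound {R : realType} {r} {I : 'I_r -> finType} {b}
  (p : forall i : 'I_r, I i -> R) (adv : Input I -> b.-tuple bool)
  (cost : 'I_r -> Input I -> R) (f : R -> R) (i : 'I_r) :
  is_round_distr p ->
  (forall x y t, 0 <= x -> 0 <= y -> 0 <= t <= 1 ->
     f (t * x + (1 - t) * y) <= t * f x + (1 - t) * f y) ->
  (forall (y : Input I) (beta : b.-tuple bool),
     0 < PrW p adv i y beta ->
     f (KL (condp p adv i y beta) (p i)) <= condE p adv (cost i) i y beta) ->
  f (\sum_x prodp p x * KL (condp p adv i x (adv x)) (p i))
    <= \sum_x prodp p x * cost i x.
Proof.
move=> hp hconv hyp.
have P0 := P_ge0 _ hp.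
rewrite -(class_trick p adv i (fun _ x' => cost i x')) //.
have step : \sum_x prodp p x * f (KL (condp p adv i x (adv x)) (p i))
   <= \sum_x prodp p x * condE p adv (cost i) i x (adv x).
  apply: ler_sum => x _.
  have [Pz|Pnz] := eqVneq (prodp p x) 0; first by rewrite Pz !mul0r.
  have Ppos : 0 < prodp p x by rewrite lt_def Pnz P0.
  apply: ler_wpM2l => //; apply: hyp.
  exact: lt_le_trans Ppos (PrW_ge _ _ _ _ P0).
apply: le_trans step.
have J := jensen_seq _ _ f hconv (prodp p) (fun x => KL (condp p adv i x (adv x)) (p i))
  (index_enum (Input I)) P0
  (fun x => KLx_ge0 p adv i x (adv x) hp).
rewrite P_sum1 // ltr01 mul1r divr1 in J.
exact: J.
Qed.

Lemma condp_eq {R : realType} {r} {I : 'I_r -> finType} {b}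
  (p : forall i : 'I_r, I i -> R) (adv : Input I -> b.-tuple bool) i x x' z :
  Wevent adv i x (adv x) x' -> condp p adv i x' (adv x') z = condp p adv i x (adv x) z.
Proof.
move=> W; rewrite /condp (PrW_eq W); congr (_ / _).
by apply: eq_bigl => t; rewrite (Wev_trans W).
Qed.

Arguments condp_eq {R r I b p adv i x x' z}.

Lemma KL_expand {R : realType} {r} {I : 'I_r -> finType} {b}
  (p : forall i : 'I_r, I i -> R) (adv : Input I -> b.-tuple bool) i y beta :
  KL (condp p adv i y beta) (p i) =
  (\sum_(x' | Wevent adv i y beta x') prodp p x' *
      log2 (condp p adv i y beta (x' i) / p i (x' i))) / PrW p adv i y beta.
Proof.
rewrite /KL (eq_bigr (fun z => condp p adv i y beta z *
      log2 (condp p adv i y beta z / p i z))); last first.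
  by move=> z _; case: eqP => // ->; rewrite mul0r.
rewrite -(num_partition adv i y beta) mulr_suml; apply: eq_bigr => z _.
rewrite /condp mulrAC; congr (_ / _); rewrite mulr_suml.
by apply: eq_bigr => x' /andP[_ /eqP ->].
Qed.

Lemma I_expand {R : realType} {r} {I : 'I_r -> finType} {b}
  (p : forall i : 'I_r, I i -> R) (adv : Input I -> b.-tuple bool) i :
  is_round_distr p ->
  \sum_x prodp p x * KL (condp p adv i x (adv x)) (p i) =
  \sum_x prodp p x * log2 (condp p adv i x (adv x) (x i) / p i (x i)).
Proof.
move=> hp.
under eq_bigr do rewrite KL_expand.
rewrite (class_trick p adv i (fun x x' => log2 (condp p adv i x (adv x) (x' i) / p i (x' i)))) //.
  exact: P_ge0.
by move=> x x' W /=; rewrite (condp_eq W).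
Qed.

Definition Qk {R : realType} {r} {I : 'I_r -> finType} {b}
  (p : forall i : 'I_r, I i -> R) (adv : Input I -> b.-tuple bool) (k : nat) (x : Input I) : R :=
  \sum_(x' : Input I | [forall j : 'I_r, (j < k)%N ==> (x' j == x j)] && (adv x' == adv x)) prodp p x'.

Lemma Q_PrW {R : realType} {r} {I : 'I_r -> finType} {b}
  (p : forall i : 'I_r, I i -> R) (adv : Input I -> b.-tuple bool) (i : 'I_r) x :
  PrW p adv i x (adv x) = Qk p adv i x.
Proof. by []. Qed.

Lemma Q_num {R : realType} {r} {I : 'I_r -> finType} {b}
  (p : forall i : 'I_r, I i -> R) (adv : Input I -> b.-tuple bool) (i : 'I_r) x :
  \sum_(x' | Wevent adv i x (adv x) x' && (x' i == x i)) prodp p x' = Qk p adv i.+1 x.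
Proof.
apply: eq_bigl => x'; rewrite /Wevent.
have -> : [forall j : 'I_r, (j < i.+1)%N ==> (x' j == x j)] =
          [forall j : 'I_r, (j < i)%N ==> (x' j == x j)] && (x' i == x i).
  apply/forallP/andP => [H|[/forallP H1 H2] j].
    split; last by have := H i; rewrite ltnSn.
    by apply/forallP => j; apply/implyP => ji; apply: (implyP (H j)); apply: ltnW.
  apply/implyP; rewrite ltnS leq_eqVlt => /orP[/eqP ji|ji].
    by have -> : j = i by apply: val_inj.
  exact: (implyP (H1 j)).
by case: [forall j : 'I_r, _]; case: (adv x' == adv x); case: (x' i == x i).
Qed.

Lemma Q_r {R : realType} {r} {I : 'I_r -> finType} {b}
  (p : forall i : 'I_r, I i -> R) (adv : Input I -> b.-tuple bool) x :
  Qk p adv r x = prodp p x.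
Proof.
rewrite /Qk (eq_bigl (pred1 x)) ?big_pred1_eq // => x' /=.
apply/andP/eqP => [[/forallP H _]|->]; last first.
  by split=> //; apply/forallP => j; apply/implyP.
by apply/ffunP => j; apply/eqP; apply: (implyP (H j)).
Qed.

Lemma Q_ge {R : realType} {r} {I : 'I_r -> finType} {b}
  (p : forall i : 'I_r, I i -> R) (adv : Input I -> b.-tuple bool) k x :
  is_round_distr p -> prodp p x <= Qk p adv k x.
Proof.
move=> hp; rewrite /Qk (bigD1 x) /=; last first.
  by rewrite eqxx andbT; apply/forallP => j; apply/implyP.
by rewrite lerDl; apply: sumr_ge0 => ? _; apply: P_ge0.
Qed.

Lemma ln_prod {R : realType} (T : Type) (F : T -> R) (s : seq T) :
  (forall i, 0 < F i) -> ln (\prod_(i <- s) F i) = \sum_(i <- s) ln (F i).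
Proof.
move=> Fp; elim: s => [|a s IH]; first by rewrite !big_nil ln1.
rewrite !big_cons lnM ?IH // posrE //; exact: prodr_gt0.
Qed.

Lemma factor_pos {R : realType} {r} {I : 'I_r -> finType}
  (p : forall i : 'I_r, I i -> R) x (i : 'I_r) :
  is_round_distr p -> 0 < prodp p x -> 0 < p i (x i).
Proof.
case=> h _ Pp; rewrite lt_def h andbT; apply/eqP => pz.
by move: Pp; rewrite /prodp (bigD1 i) //= pz mul0r ltxx.
Qed.

Lemma sum_log_x {R : realType} {r} {I : 'I_r -> finType} {b}
  (p : forall i : 'I_r, I i -> R) (adv : Input I -> b.-tuple bool) x :
  is_round_distr p -> 0 < prodp p x ->
  \sum_(i < r) log2 (condp p adv i x (adv x) (x i) / p i (x i)) =
  - ln (Qk p adv 0 x) / ln 2.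
Proof.
move=> hp Pp.
have Qp k : 0 < Qk p adv k x := lt_le_trans Pp (Q_ge _ _ _ _ hp).
have pp i : 0 < p i (x i) := factor_pos _ _ i hp Pp.
set g := fun k => ln (Qk p adv k x).
transitivity (\sum_(i < r) ((g i.+1 - g i) - ln (p i (x i))) / ln 2).
  apply: eq_bigr => i _.
  rewrite /log2 /condp Q_num Q_PrW ln_div ?posrE //; last by apply: divr_gt0.
  by rewrite ln_div ?posrE.
rewrite -mulr_suml sumrB -(big_mkord xpredT (fun i => g i.+1 - g i)) telescope_sumr //.
rewrite -ln_prod // -/(prodp p x) /g Q_r.
congr (_ / _); ring.
Qed.

Lemma Q0_eq {R : realType} {r} {I : 'I_r -> finType} {b}
  (p : forall i : 'I_r, I i -> R) (adv : Input I -> b.-tuple bool) x :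
  Qk p adv 0 x = \sum_(x' | adv x' == adv x) prodp p x'.
Proof.
apply: eq_bigl => x'.
have -> : [forall j : 'I_r, (j < 0)%N ==> (x' j == x j)] by apply/forallP.
by [].
Qed.

Lemma sum_invQ {R : realType} {r} {I : 'I_r -> finType} {b}
  (p : forall i : 'I_r, I i -> R) (adv : Input I -> b.-tuple bool) :
  is_round_distr p ->
  \sum_x prodp p x / Qk p adv 0 x <= 2 ^+ b.
Proof.
move=> hp; have P0 := P_ge0 _ hp.
rewrite (partition_big adv xpredT) //=.
apply: (le_trans (y := \sum_(beta : b.-tuple bool) (1 : R))).
  apply: ler_sum => beta _.
  set q := \sum_(x | adv x == beta) prodp p x.
  rewrite (eq_bigr (fun x => prodp p x / q)); last first.
    by move=> x /eqP ea; rewrite Q0_eq ea.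
  rewrite -mulr_suml.
  have q0 : 0 <= q by apply: sumr_ge0.
  have -> : \sum_(x | true && (adv x == beta)) prodp p x = q by [].
  have [->|qn] := eqVneq q 0; first by rewrite mul0r ler01.
  by rewrite mulfV.
rewrite sumr_const card_tuple card_bool -natrX.
by [].
Qed.

Lemma entropy_bound {R : realType} {r} {I : 'I_r -> finType} {b}
  (p : forall i : 'I_r, I i -> R) (adv : Input I -> b.-tuple bool) :
  is_round_distr p ->
  \sum_x prodp p x * (- ln (Qk p adv 0 x) / ln 2) <= b%:R.
Proof.
move=> hp; have P0 := P_ge0 _ hp.
have L0 := ln2_gt0 R.
set L := ln (2 : R) in L0 *.
have t2 : (0 : R) < 2 ^+ b by apply: exprn_gt0.
have key x : prodp p x * (- ln (Qk p adv 0 x)) <=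
    prodp p x * ((2 ^+ b)^-1 * (Qk p adv 0 x)^-1 - 1 + b%:R * L).
  have [->|Pn] := eqVneq (prodp p x) 0; first by rewrite !mul0r.
  have Pp : 0 < prodp p x by rewrite lt_def Pn P0.
  have Qp : 0 < Qk p adv 0 x := lt_le_trans Pp (Q_ge _ _ _ _ hp).
  apply: ler_wpM2l => //.
  have cp : 0 < 2 ^+ b * Qk p adv 0 x by apply: mulr_gt0.
  have ci : 0 < (2 ^+ b * Qk p adv 0 x)^-1 by rewrite invr_gt0.
  have h := ln_le_sub1 _ _ ci.
  have e2 : ln (2 ^+ b : R) = b%:R * L by rewrite lnXn // mulr_natl.
  rewrite lnV ?posrE // lnM ?posrE // e2 invfM in h.
  lra.
apply: (@le_trans _ _ ((\sum_x prodp p x * (- ln (Qk p adv 0 x))) / L)).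
  by rewrite mulr_suml; apply: ler_sum => x _; rewrite mulrA.
rewrite ler_pdivrMr //.
apply: le_trans (ler_sum _ (fun x _ => key x)) _.
have e : \sum_x prodp p x * ((2 ^+ b)^-1 * (Qk p adv 0 x)^-1 - 1 + b%:R * L)
   = (2 ^+ b)^-1 * (\sum_x prodp p x / Qk p adv 0 x) - \sum_x prodp p x
       + b%:R * L * \sum_x prodp p x.
  rewrite mulr_sumr mulr_sumr -sumrB -big_split /=; apply: eq_bigr => x _; ring.
rewrite e P_sum1 // mulr1.
have := sum_invQ p adv hp.
move=> hs.
have : (2 ^+ b)^-1 * (\sum_x prodp p x / Qk p adv 0 x) <= 1.
  by rewrite ler_pdivrMl // mulr1.
lra.
Qed.

Theorem theorem7 (R : realType) (r : nat) (I : 'I_r -> finType) (b : nat)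
    (p : forall i : 'I_r, I i -> R)
    (adv : Input I -> b.-tuple bool)
    (cost : 'I_r -> Input I -> R)
    (f : R -> R) :
  (0 < r)%N ->
  is_round_distr p ->
  (forall i x, 0 <= cost i x) ->
  (forall x y t, 0 <= x -> 0 <= y -> 0 <= t <= 1 ->
     f (t * x + (1 - t) * y) <= t * f x + (1 - t) * f y) ->
  (forall x y, 0 <= x -> x <= y -> f y <= f x) ->
  (forall (i : 'I_r) (y : Input I) (beta : b.-tuple bool),
     0 < PrW p adv i y beta ->
     f (KL (condp p adv i y beta) (p i)) <= condE p adv (cost i) i y beta) ->
  r%:R * f (b%:R / r%:R) <= Ecost p cost.
Proof.
move=> r0 hp c0 hconv hdec hyp.
have P0 := P_ge0 _ hp.
pose Ii (i : 'I_r) := \sum_x prodp p x * KL (condp p adv i x (adv x)) (p i).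
have Ii0 i : 0 <= Ii i.
  by apply: sumr_ge0 => x _; apply: mulr_ge0 => //; apply: KLx_ge0.
have sumI : \sum_(i < r) Ii i <= b%:R.
  rewrite /Ii; under eq_bigr do rewrite I_expand //.
  rewrite exchange_big /=.
  apply: le_trans (entropy_bound p adv hp).
  rewrite le_eqVlt; apply/orP; left; apply/eqP.
  apply: eq_bigr => x _; rewrite -mulr_sumr.
  have [->|Pn] := eqVneq (prodp p x) 0; first by rewrite !mul0r.
  have Pp : 0 < prodp p x by rewrite lt_def Pn P0.
  by rewrite sum_log_x.
have rp : (0 : R) < r%:R by rewrite ltr0n.
have E1 : Ecost p cost = \sum_(i < r) \sum_x prodp p x * cost i x.
  rewrite /Ecost; under eq_bigr do rewrite mulr_sumr.
  by rewrite exchange_big.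
have E2 : \sum_(i < r) f (Ii i) <= Ecost p cost.
  rewrite E1; apply: ler_sum => i _; apply: round_bound => //.
  exact: hyp.
have J := jensen_seq _ _ f hconv (fun _ => (1 : R)) Ii (index_enum 'I_r)
  (fun _ => ler01) Ii0.
have s1 : \sum_(i <- index_enum 'I_r) (1 : R) = r%:R.
  by rewrite sumr_const card_ord.
rewrite s1 rp in J.
have J' : r%:R * f ((\sum_(i < r) Ii i) / r%:R) <= \sum_(i < r) f (Ii i).
  move: (J isT).
  under eq_bigr do rewrite mul1r.
  by under [X in _ <= X]eq_bigr do rewrite mul1r.
apply: le_trans E2; apply: le_trans J'.
rewrite ler_pM2l //; apply: hdec.
  by apply: divr_ge0; [apply: sumr_ge0 | apply: ltW].
by rewrite ler_pM2r // invr_gt0.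
Qed.
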